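(* Let $k\ge 2$ and $\alpha\in[0,1)$ be such that $b=\frac{k-1}{1-\alpha}$ is an integer, and let $n$ be a positive integer divisible by $b$; put $t=\alpha n$ (an integer). Then \[ S(n,t,k)\ \ge\ \binom{b}{\alpha b}^{n/b}. \]
   Context: A $k$-CNF formula is a conjunction of clauses (disjunctions of literals) each of width at most $k$. $\mathrm{sat}_t(F)$ is the set of satisfying assignments of $F$ of Hamming weight exactly $t$. $F$ is $t$-admissible if it has no satisfying assignment of Hamming weight less than $t$. $S(n,t,k)$ is the maximum of $|\mathrm{sat}_t(F)|$ over all $t$-admissible $k$-CNF formulas $F$ on $n$ variables. *)

(* Defs.v *)
From mathcomp Require Import all_boot all_order all_algebra.
Set Implicit Arguments. Unset Strict Implicit. Unset Printing Implicit Defensive.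

(* A literal is a pair (i, b): b = true means x_i, b = false means ~x_i. *)
Definition literal (n : nat) := ('I_n * bool)%type.
Definition clause (n : nat) := {set literal n}.
Definition cnf (n : nat) := {set clause n}.
Definition assignment (n : nat) := {ffun 'I_n -> bool}.

Definition lit_sat n (a : assignment n) (l : literal n) : bool := a l.1 == l.2.
Definition clause_sat n (a : assignment n) (C : clause n) : bool :=
  [exists l in C, lit_sat a l].
Definition cnf_sat n (a : assignment n) (F : cnf n) : bool :=
  [forall C in F, clause_sat a C].

Definition weight n (a : assignment n) : nat := #|[set i | a i]|.

Definition is_kCNF n (k : nat) (F : cnf n) : bool := [forall C in F, #|C| <= k].

Definition sat_t n (t : nat) (F : cnf n) : {set assignment n} :=
  [set a | cnf_sat a F & weight a == t].

Definition admissible n (t : nat) (F : cnf n) : bool :=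
  [forall a : assignment n, cnf_sat a F ==> (t <= weight a)].

Definition S (n t k : nat) : nat :=
  \max_(F : cnf n | is_kCNF k F && admissible t F) #|sat_t t F|.

(* Main.v *)
Require Import Defs.
From mathcomp Require Import all_boot all_order all_algebra.
From mathcomp Require Import zify ring lra.
Set Implicit Arguments. Unset Strict Implicit. Unset Printing Implicit Defensive.
Import Order.TTheory GRing.Theory Num.Theory.

Lemma bpos m b (i : 'I_(m*b)) : 0 < b.
Proof. case: b i => [|b] // i; by case: i; rewrite muln0. Qed.

Lemma blk_lt m b (i : 'I_(m*b)) : i %/ b < m.
Proof. have hb := bpos i; by rewrite ltn_divLR. Qed.

Lemma off_lt m b (i : 'I_(m*b)) : i %% b < b.
Proof. have hb := bpos i; by rewrite ltn_pmod. Qed.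

Lemma idx_lt m b (j : 'I_m) (x : 'I_b) : j * b + x < m * b.
Proof.
have hj := ltn_ord j; have hx := ltn_ord x.
apply: (@leq_trans (j.+1 * b)); first by rewrite mulSn addnC ltn_add2r.
by rewrite leq_mul2r hj orbT.
Qed.

Definition blkO m b (i : 'I_(m*b)) : 'I_m := Ordinal (blk_lt i).
Definition offO m b (i : 'I_(m*b)) : 'I_b := Ordinal (off_lt i).
Definition idx m b (j : 'I_m) (x : 'I_b) : 'I_(m*b) := Ordinal (idx_lt j x).

Lemma idxK m b (i : 'I_(m*b)) : idx (blkO i) (offO i) = i.
Proof. by apply: val_inj => /=; rewrite -divn_eq. Qed.

Lemma blk_idx m b (j : 'I_m) (x : 'I_b) : blkO (idx j x) = j.
Proof.
apply: val_inj => /=; have hb : 0 < b by case: b x => [[]|].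
by rewrite divnMDl // divn_small ?addn0.
Qed.

Lemma off_idx m b (j : 'I_m) (x : 'I_b) : offO (idx j x) = x.
Proof.
apply: val_inj => /=.
by rewrite modnMDl modn_small.
Qed.

Lemma sum_blocks m b (F : 'I_(m*b) -> nat) :
  \sum_(i < m*b) F i = \sum_(j < m) \sum_(x < b) F (idx j x).
Proof.
rewrite pair_big /=.
rewrite (reindex (fun p : 'I_m * 'I_b => idx p.1 p.2)) //=.
exists (fun i => (blkO i, offO i)) => [[j x] _|i _] /=.
  by rewrite blk_idx off_idx.
by rewrite idxK.
Qed.

Lemma inj_card (T T' : finType) (A : {pred T}) (B : {set T'}) (f : T -> T') :
  {in A &, injective f} -> (forall x, x \in A -> f x \in B) -> #|A| <= #|B|.
Proof.
move=> inj hAB; rewrite -(card_in_imset inj); apply: subset_leq_card.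
by apply/subsetP => y /imsetP [x xA ->]; apply: hAB.
Qed.

Definition Fm m b k : cnf (m*b) :=
  [set C : clause (m*b) | (#|C| == k) &&
     [exists j : 'I_m, [forall l in C, l.2 && (blkO l.1 == j)]]].

Definition Z m b (a : assignment (m*b)) (j : 'I_m) : {set 'I_b} :=
  [set x | ~~ a (idx j x)].

Lemma sat_zeros m b k (a : assignment (m*b)) :
  cnf_sat a (Fm m b k) -> forall j, #|Z a j| < k.
Proof.
move=> hs j; rewrite ltnNge; apply/negP => /card_geqP [s [us ss sub]].
pose C : clause (m*b) := [set (idx j x, true) | x in s].
have hC : C \in Fm m b k.
  rewrite inE; apply/andP; split.
    rewrite card_in_imset ?(card_uniqP us) ?ss //.
    by move=> x y _ _ /(congr1 (fun l : 'I_(m*b) * bool => offO l.1)); rewrite /= !off_idx.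
  apply/existsP; exists j; apply/forallP => l; apply/implyP => /imsetP [x _ ->] /=.
  by rewrite blk_idx eqxx.
move/forallP: hs => /(_ C); rewrite hC /= => /existsP [l /andP [/imsetP [x xs ->]]].
have := sub x xs; rewrite inE /lit_sat /=.
by case: (a _).
Qed.

Lemma zeros_sat m b k (a : assignment (m*b)) :
  (forall j, #|Z a j| < k) -> cnf_sat a (Fm m b k).
Proof.
move=> hz; apply/forallP => C; apply/implyP; rewrite inE => /andP [/eqP hk /existsP [j /forallP hj]].
rewrite /clause_sat; apply: contraT => hno.
have : k <= #|Z a j|.
  rewrite -hk; apply: (@inj_card _ _ (mem C) _ (fun l => offO l.1)).
    move=> l1 l2 h1 h2 /= e.
    move: (hj l1) (hj l2); rewrite h1 h2 /= => /andP [e1 /eqP b1] /andP [e2 /eqP b2].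
    case: l1 l2 e1 e2 b1 b2 e h1 h2 => [i1 c1] [i2 c2] /= -> -> b1 b2 e _ _.
    by rewrite -(idxK i1) -(idxK i2) b1 b2 e.
  move=> l lC; rewrite inE.
  move: (hj l); rewrite lC /= => /andP [e1 /eqP b1].
  move: hno => /existsPn /(_ l); rewrite lC /lit_sat /= e1 -b1 idxK.
  by case: (a _).
by rewrite leqNgt hz.
Qed.

Lemma weight_sum m b (a : assignment (m*b)) :
  weight a = \sum_(j < m) #|[set x : 'I_b | a (idx j x)]|.
Proof.
rewrite /weight -sum1_card big_mkcond /= sum_blocks.

apply: eq_bigr => j _.
rewrite -sum1_card [RHS]big_mkcond /=.
by apply: eq_bigr => x _; rewrite !inE.
Qed.

Lemma ones_zeros m b (a : assignment (m*b)) j :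
  #|[set x : 'I_b | a (idx j x)]| + #|Z a j| = b.
Proof.
have -> : Z a j = ~: [set x : 'I_b | a (idx j x)] by apply/setP => x; rewrite !inE.
by rewrite cardsC card_ord.
Qed.

Lemma sum_const_ord m c : \sum_(j < m) c = m * c.
Proof. by rewrite sum_nat_const card_ord. Qed.

Lemma core m b a0 k : 0 < k -> b = a0 + k.-1 -> 'C(b, a0) ^ m <= S (m*b) (m*a0) k.
Proof.
move=> hk hb.
set G := Fm m b k.
have kG : is_kCNF k G.
  by apply/forallP => C; apply/implyP; rewrite inE => /andP [/eqP -> _].
have aG : admissible (m*a0) G.
  apply/forallP => a; apply/implyP => hs.
  rewrite weight_sum -sum_const_ord; apply: leq_sum => j _.
  have := sat_zeros hs j; have := ones_zeros a j; lia.
apply: leq_trans (@leq_bigmax_cond _ (fun F => is_kCNF k F && admissible (m*a0) F) (fun F => #|sat_t (m*a0) F|) G _); last by rewrite kG aG.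
pose R0 := [set A : {set 'I_b} | #|A| == a0].
have -> : 'C(b, a0) ^ m = #|@ffun_on 'I_m R0|.
  by rewrite card_ffun_on card_draws !card_ord.
pose g (f : {ffun 'I_m -> {set 'I_b}}) : assignment (m*b) :=
  [ffun i : 'I_(m*b) => offO i \in f (blkO i)].
have gones f j : [set x : 'I_b | g f (idx j x)] = f j.
  by apply/setP => x; rewrite !inE ffunE blk_idx off_idx.
apply: (@inj_card _ _ _ _ g).
  move=> f1 f2 _ _ e; apply/ffunP => j; apply/setP => x.
  by have := congr1 (fun h : assignment (m*b) => h (idx j x)) e; rewrite /= !ffunE blk_idx off_idx.
move=> f /ffun_onP hf; rewrite inE; apply/andP; split.
  apply: zeros_sat => j; have := ones_zeros (g f) j; rewrite gones.
  have := hf j; rewrite inE => /eqP; move=> ->; move: hb hk; clear; lia.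
rewrite weight_sum -(sum_const_ord m a0); apply/eqP; apply: eq_bigr => j _.
by rewrite gones; have := hf j; rewrite inE => /eqP.
Qed.

Local Open Scope ring_scope.

Theorem theorem2 (R : realFieldType) (k : nat) (alpha : R) (b n t a : nat) :
  (2 <= k)%N ->
  0 <= alpha -> alpha < 1 ->
  (b%:R : R) = (k.-1)%:R / (1 - alpha) ->
  (0 < n)%N -> (b %| n)%N ->
  (t%:R : R) = alpha * n%:R ->
  (a%:R : R) = alpha * b%:R ->
  ('C(b, a) ^ (n %/ b) <= S n t k)%N.
Proof.
move=> hk ha0 ha1 hb hn hdiv ht ha.
have h1 : (k.-1)%:R = b%:R * (1 - alpha) :> R.
  by rewrite hb divfK // subr_eq0 eq_sym lt_eqF.
have hba : b = (a + k.-1)%N.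
  apply/eqP; rewrite -(eqr_nat R) natrD ha h1; apply/eqP; ring.
move/dvdnP: hdiv => [m hm].
have bpos : (0 < b)%N by lia.
have htm : t = (m * a)%N.
  apply/eqP; rewrite -(eqr_nat R) ht hm !natrM ha; apply/eqP; ring.
rewrite hm mulnK // htm.
apply: core => //; lia.
Qed.
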